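(* In the setting of the context, let $c_p(\epsilon)$, $p\in\mathrm{JK}$, be arbitrary functions of $\epsilon$ independent of $\mathbf t$, and let $\mathcal F_\alpha(\mathbf t,\epsilon)=\sum_{p\in\mathrm{JK}}c_p(\epsilon)e^{-H_\epsilon(p)}$ (a generic solution of the classical equivariant cohomology relations). Then $\hat I_{X_{\mathbf t}}\cdot\mathcal F_\alpha(\mathbf t,\epsilon)$ is a formal solution of the equivariant Picard–Fuchs equations, i.e.\ $\mathrm{PF}^{\mathrm{eq}}_\gamma\,\hat I_{X_{\mathbf t}}\cdot\mathcal F_\alpha=0$ for all $\gamma\in\Lambda$.
   Context: $Q=(Q^a_i)$ integer $r\times N$ matrix with columns $Q_i$; chamber $\mathcal K\ni\mathbf t$ of regular values of $\mu^a(Z)=\sum_iQ^a_i|Z^i|^2$; $X_{\mathbf t}=\mu^{-1}(\mathbf t)/U(1)^r$ smooth. JK $=\{p=(i_1,\dots,i_r):\mathcal K\subseteq\mathrm{Cone}(Q_{i_1},\dots,Q_{i_r})\}$, $Q_p=(Q_{i_1}|\cdots|Q_{i_r})$ (invertible over $\mathbb{Z}$), $H_\epsilon(p)=\sum_{a,b}\epsilon_{i_b}(Q_p^{-1})^b_at^a$. $\Lambda=\mathcal K^\vee\cap\mathbb{Z}^r$, $\mathcal K^\vee=\{\mathbf d:\sum_ad_at^a\ge0\ \forall\mathbf t\in\mathcal K\}$. $\mathcal D_i=\epsilon_i+\sum_aQ^a_i\partial/\partial t^a$; Pochhammer $(z)_n=\Gamma(z+n)/\Gamma(z)$. Givental operator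 $\hat I_{X_{\mathbf t}}=\sum_{\mathbf d\in\Lambda}e^{-\lambda\sum_ad_at^a}\prod_{i=1}^N(\mathcal D_i/\lambda)_{-\sum_ad_aQ^a_i}$. Equivariant Picard–Fuchs operators $\mathrm{PF}^{\mathrm{eq}}_\gamma=\prod_{\{i:\sum_a\gamma_aQ^a_i>0\}}(\mathcal D_i/\lambda)_{\sum_a\gamma_aQ^a_i}-e^{-\lambda\sum_a\gamma_at^a}\prod_{\{i:\sum_a\gamma_aQ^a_i\le0\}}(\mathcal D_i/\lambda)_{-\sum_a\gamma_aQ^a_i}$. *)

(* Defs.v *)
From HB Require Import structures.
From mathcomp Require Import all_boot all_order all_algebra.
From mathcomp Require Import boolp classical_sets topology normedtype reals.
Set Implicit Arguments. Unset Strict Implicit. Unset Printing Implicit Defensive.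
Import Order.TTheory GRing.Theory Num.Theory.
Import numFieldNormedType.Exports.
Local Open Scope ring_scope.
Local Open Scope classical_set_scope.

Section Defs.
Variables (R : realType) (F : numFieldType) (r N : nat) (Q : 'M[int]_(r, N)).

Definition colR (i : 'I_N) : 'rV[R]_r := \row_a (Q a i)%:~R.

Definition coneS (S : {set 'I_N}) : set 'rV[R]_r :=
  [set t | exists x : 'I_N -> R, (forall i, 0 <= x i) /\
     t = \sum_(i in S) x i *: colR i].

Definition spans (S : {set 'I_N}) : Prop :=
  forall v : 'rV[R]_r, exists x : 'I_N -> R, v = \sum_(i in S) x i *: colR i.

(* regular values of mu(Z) = sum_i Q_i |Z^i|^2 lying in its image *)
Definition regular (t : 'rV[R]_r) : Prop :=
  coneS [set: 'I_N]%SET t /\ forall S, ~ spans S -> ~ coneS S t.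

Definition chamber (K : set 'rV[R]_r) : Prop :=
  exists t0, regular t0 /\ K = connected_component [set t | regular t] t0.

Definition Pidx := {ffun 'I_r -> 'I_N}.

Definition coneP (p : Pidx) : set 'rV[R]_r :=
  [set t | exists x : 'I_r -> R, (forall b, 0 <= x b) /\
     t = \sum_b x b *: colR (p b)].

Definition JK (K : set 'rV[R]_r) (p : Pidx) : Prop := K `<=` coneP p.

Definition Qp (p : Pidx) : 'M[int]_r := \matrix_(a, b) Q a (p b).

Definition Lam (K : set 'rV[R]_r) : set 'rV[int]_r :=
  [set d | forall t, K t -> 0 <= \sum_a (d 0 a)%:~R * t 0 a].

Definition dQ (d : 'rV[int]_r) (i : 'I_N) : int := \sum_a d 0 a * Q a i.

(* Pochhammer (z)_n = Gamma(z+n)/Gamma(z) for integer n *)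
Definition poch (z : F) (n : int) : F :=
  match n with
  | Posz m => \prod_(k < m) (z + k%:R)
  | Negz m => (\prod_(k < m.+1) (z - k.+1%:R))^-1
  end.

Variables (eps : 'I_N -> F) (lam : F).

(* coefficient of t^a in H_eps(p) = sum_{a,b} eps_{i_b} (Q_p^-1)^b_a t^a *)
Definition hcoef (p : Pidx) (a : 'I_r) : F :=
  \sum_b eps (p b) * ((invmx (Qp p)) b a)%:~R.

(* A formal exponential sum s represents
     sum_p sum_d  s p d * exp( - lam * (d . t) - H_eps(p)(t) ).           *)
Definition fser := Pidx -> 'rV[int]_r -> F.

(* eigenvalue of D_i = eps_i + sum_a Q^a_i d/dt^a on the basis element
   exp(-lam d.t - H_eps(p)) *)
Definition eig (p : Pidx) (d : 'rV[int]_r) (i : 'I_N) : F :=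
  eps i - \sum_a (Q a i)%:~R * (lam * (d 0 a)%:~R + hcoef p a).

Definition pochOp (P : pred 'I_N) (n : 'I_N -> int) (s : fser) : fser :=
  fun p d => (\prod_(i | P i) poch (eig p d i / lam) (n i)) * s p d.

(* multiplication by exp(-lam gamma.t) *)
Definition shiftOp (g : 'rV[int]_r) (s : fser) : fser :=
  fun p d => s p (d - g).

(* Givental operator  I = sum_{d in Lambda} e^{-lam d.t} prod_i (D_i/lam)_{-d.Q_i}
   applied to a formal sum s whose d-support is contained in the finite list S
   (the coefficient at d' collects the terms d = d' - e, e in S). *)
Definition Ihat (K : set 'rV[R]_r) (S : seq 'rV[int]_r) (s : fser) : fser :=
  fun p d' => \sum_(e <- S)
     (if (d' - e) \in Lam K then
        shiftOp (d' - e) (pochOp predT (fun i => - dQ (d' - e) i) s) p d'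
      else 0).

Definition PFeq (g : 'rV[int]_r) (s : fser) : fser :=
  fun p d => pochOp (fun i => 0 < dQ g i) (fun i => dQ g i) s p d
           - shiftOp g (pochOp (fun i => dQ g i <= 0) (fun i => - dQ g i) s) p d.

Definition Falpha (K : set 'rV[R]_r) (c : Pidx -> F) : fser :=
  fun p d => if `[< JK K p >] && (d == 0) then c p else 0.

End Defs.

(* Main.v *)
Require Import Defs.
From HB Require Import structures.
From mathcomp Require Import all_boot all_order all_algebra.
From mathcomp Require Import boolp classical_sets topology normedtype reals.
From mathcomp Require Import ring.
Import Order.TTheory GRing.Theory Num.Theory.
Import numFieldNormedType.Exports.
Set Implicit Arguments. Unset Strict Implicit.
Local Open Scope ring_scope.
Local Open Scope classical_set_scope.
Section Poch.
Variable F : numFieldType.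
Implicit Types (x : F).

Lemma pochS x (z : int) : (forall k : nat, (0 < k)%N -> x != k%:R) ->
  poch x (z + 1) = poch x z * (x + z%:~R).
Proof.
move=> hx; case: z => [m|m].
  have -> : (Posz m + 1 = Posz m.+1)%R by rewrite -addn1 PoszD.
  by rewrite /poch big_ord_recr /=.
have hm : x - (m.+1)%:R != 0 by rewrite subr_eq0 hx.
case: m hm => [|m] hm.
  have -> : (Negz 0 + 1 = 0 :> int)%R by [].
  rewrite /poch big_ord_recr big_ord0 /= NegzE mulrNz.
  by rewrite big_ord0 mul1r pmulrn mulVf.
have -> : (Negz m.+1 + 1 = Negz m :> int)%R.
  by rewrite !NegzE -addn1 PoszD opprD addrK.
rewrite /poch [in RHS]big_ord_recr /= NegzE mulrNz pmulrn invfM -mulrA mulVf ?mulr1 //.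
Qed.

Lemma pochD x (c b : int) : (forall k : nat, (0 < k)%N -> x != k%:R) ->
  (0 <= b)%R -> poch x c * poch (x + c%:~R) b = poch x (c + b).
Proof.
move=> hx; case: b => [b|//] _.
elim: b => [|b IH]; first by rewrite /poch big_ord0 mulr1 addr0.
rewrite [poch (x + _) _]/poch big_ord_recr /= -/(poch _ (Posz b)) mulrA IH.
have -> : (c + Posz b.+1 = (c + Posz b) + 1)%R by rewrite -addn1 PoszD addrA.
by rewrite pochS // rmorphD /= addrA pmulrn.
Qed.
End Poch.
Section Poch2.
Variable F : numFieldType.
Implicit Types (x : F).

Lemma poch0 (z : int) : (0 < z)%R -> poch (0 : F) z = 0.
Proof.
case: z => [[|m]|//] //= _.
by rewrite /poch big_ord_recl /= add0r mul0r.
Qed.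

Definition Wf x (n m : int) := if (0 < m)%R then poch x (m - n) else poch x (- n).

Lemma L1i x (n m : int) : (forall k : nat, (0 < k)%N -> x != k%:R) ->
  (if (0 < m)%R then poch (x - n%:~R) m else 1) * poch x (- n) = Wf x n m.
Proof.
move=> hx; rewrite /Wf; case: ifP => hm; last by rewrite mul1r.
by rewrite mulrC -rmorphN pochD // ?ltW // addrC.
Qed.

Lemma L2i x (n m : int) : (forall k : nat, (0 < k)%N -> x != k%:R) ->
  (if (m <= 0)%R then poch (x - (n - m)%:~R) (- m) else 1) * poch x (- (n - m)) = Wf x n m.
Proof.
move=> hx; rewrite /Wf; case: ifP => hm.
  rewrite (le_gtF hm) mulrC -rmorphN pochD // ?oppr_ge0 //.
  by congr poch; rewrite opprB addrC addrA addNr add0r.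
by rewrite ltNge hm mul1r opprB.
Qed.
End Poch2.
Arguments Wf {F}.
Section Main.
Variables (R : realType) (F : numFieldType) (r N : nat) (Q : 'M[int]_(r, N)).
Variables (eps : 'I_N -> F) (lam : F).

Lemma dQB (d g : 'rV[int]_r) i : dQ Q (d - g) i = dQ Q d i - dQ Q g i.
Proof. by rewrite /dQ -sumrB; apply: eq_bigr => a _; rewrite !mxE mulrBl. Qed.

Lemma eigE (hlam : lam != 0) p (d : 'rV[int]_r) i :
  eig Q eps lam p d i / lam = eig Q eps lam p 0 i / lam - (dQ Q d i)%:~R.
Proof.
rewrite /eig /dQ.
have -> : \sum_a (Q a i)%:~R * (lam * ((0 : 'rV[int]_r) 0 a)%:~R + hcoef Q eps p a)
   = \sum_a (Q a i)%:~R * hcoef Q eps p a.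
  by apply: eq_bigr => a _; rewrite mxE mulr0 add0r.
have -> : \sum_a (Q a i)%:~R * (lam * (d 0 a)%:~R + hcoef Q eps p a)
   = lam * \sum_a (d 0 a * Q a i)%:~R + \sum_a (Q a i)%:~R * hcoef Q eps p a.
  rewrite mulr_sumr -big_split; apply: eq_bigr => a _.
  by rewrite intrM mulrDr mulrCA [X in lam * X]mulrC.
have -> : ((\sum_a d 0 a * Q a i)%:~R : F) = \sum_a (d 0 a * Q a i)%:~R by rewrite rmorph_sum.
move: (\sum_a (d 0 a * Q a i)%:~R) (\sum_a (Q a i)%:~R * hcoef Q eps p a) => S T.
by rewrite -[S in RHS](mulfK hlam) -mulrBl opprD addrA (mulrC S) addrAC.
Qed.

Lemma IhatE (K : set 'rV[R]_r) s p (d : 'rV[int]_r) :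
  Ihat Q eps lam K [:: 0] s p d =
  if d \in Lam K then (\prod_i poch (eig Q eps lam p 0 i / lam) (- dQ Q d i)) * s p 0 else 0.
Proof.
by rewrite /Ihat big_cons big_nil addr0 subr0 /shiftOp /pochOp subrr.
Qed.

Lemma eig_pb p b : (\det (Qp Q p) = 1 \/ \det (Qp Q p) = -1) ->
  eig Q eps lam p 0 (p b) = 0.
Proof.
move=> hdet.
have hU : Qp Q p \in unitmx.
  by rewrite unitmxE; case: hdet => ->; rewrite ?unitr1 ?unitrN1.
have hinv := mulVmx hU.
rewrite /eig.
have -> : \sum_a (Q a (p b))%:~R * (lam * ((0 : 'rV[int]_r) 0 a)%:~R + hcoef Q eps p a)
   = \sum_b' eps (p b') * ((invmx (Qp Q p) *m Qp Q p) b' b)%:~R.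
  under eq_bigr => a _ do rewrite mxE mulr0 add0r /hcoef mulr_sumr.
  rewrite exchange_big /=; apply: eq_bigr => b' _.
  rewrite mxE rmorph_sum mulr_sumr; apply: eq_bigr => a _.
  by rewrite mxE rmorphM /= mulrCA (mulrC (Q a (p b))%:~R).
rewrite mulVmx // (bigD1 b) //= big1 => [|b' nb]; first by rewrite !mxE eqxx addr0 mulr1 subrr.
by rewrite !mxE (negbTE nb) mulr0.
Qed.

Lemma Lam_add (K : set 'rV[R]_r) (a b : 'rV[int]_r) : Lam K a -> Lam K b -> Lam K (a + b).
Proof.
move=> ha hb t Kt; rewrite (eq_bigr (fun i => (a 0 i)%:~R * t 0 i + (b 0 i)%:~R * t 0 i)).
  by rewrite big_split /= addr_ge0 ?ha ?hb.
by move=> i _; rewrite mxE intrD mulrDl.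
Qed.

Lemma Lam_cone (K : set 'rV[R]_r) p (e : 'rV[int]_r) : JK Q K p ->
  (forall b, 0 <= dQ Q e (p b)) -> Lam K e.
Proof.
move=> hJK he t Kt; have [x [x0 ->]] := hJK t Kt.
under eq_bigr => a _ do rewrite summxE mulr_sumr.
rewrite exchange_big /=; apply: sumr_ge0 => b _.
have -> : \sum_a (e 0 a)%:~R * (x b *: colR R Q (p b)) 0 a = x b * (dQ Q e (p b))%:~R.
  rewrite /dQ rmorph_sum mulr_sumr; apply: eq_bigr => a _.
  by rewrite !mxE rmorphM /= mulrCA.
by rewrite mulr_ge0 // ler0z.
Qed.

End Main.
Unset Implicit Arguments. Set Strict Implicit.

Theorem mainTheorem6 (R : realType) (F : numFieldType) (r N : nat)
  (Q : 'M[int]_(r, N)) (K : set 'rV[R]_r)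
  (hK : chamber Q K)
  (hsmooth : forall p : Pidx r N, JK Q K p ->
     \det (Qp Q p) = 1 \/ \det (Qp Q p) = -1)
  (eps : 'I_N -> F) (lam : F) (hlam : lam != 0)
  (hgen : forall p : Pidx r N, JK Q K p -> forall i : 'I_N, i \notin codom p ->
     forall k : nat, (0 < k)%N -> eig Q eps lam p 0 i != k%:R * lam)
  (c : Pidx r N -> F) (g : 'rV[int]_r) (hg : Lam K g) :
  forall (p : Pidx r N) (d : 'rV[int]_r),
    PFeq Q eps lam g (Ihat Q eps lam K [:: 0] (Falpha Q K c)) p d = 0.
Proof.
move=> p d.
rewrite /PFeq /shiftOp /pochOp !IhatE.
case: (pselect (JK Q K p)) => hJ; last first.
  have hs : Falpha Q K c p 0 = 0 by rewrite /Falpha asboolF.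
  by rewrite hs !mulr0 !if_same !mulr0 subrr.
have hX : forall i k, (0 < k)%N -> eig Q eps lam p 0 i / lam != k%:R.
  move=> i k hk; case: (boolP (i \in codom p)) => hi.
    have [b ->] := codomP hi.
    by rewrite (@eig_pb _ _ _ _ _ _ _ _ (hsmooth _ hJ)) mul0r eq_sym pnatr_eq0 -lt0n.
  have := hgen p hJ i hi k hk; apply: contra => /eqP h.
  by rewrite -h divfK.
have H1 : \prod_(i | 0 < dQ Q g i) poch (eig Q eps lam p d i / lam) (dQ Q g i)
     * \prod_i poch (eig Q eps lam p 0 i / lam) (- dQ Q d i)
   = \prod_i Wf (eig Q eps lam p 0 i / lam) (dQ Q d i) (dQ Q g i).
  rewrite big_mkcond /= -big_split /=; apply: eq_bigr => i _.
  by rewrite eigE // L1i // => k; apply: hX.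
have H2 : \prod_(i | dQ Q g i <= 0) poch (eig Q eps lam p (d - g) i / lam) (- dQ Q g i)
     * \prod_i poch (eig Q eps lam p 0 i / lam) (- dQ Q (d - g) i)
   = \prod_i Wf (eig Q eps lam p 0 i / lam) (dQ Q d i) (dQ Q g i).
  rewrite big_mkcond /= -big_split /=; apply: eq_bigr => i _.
  by rewrite eigE // dQB L2i // => k; apply: hX.
case: ifP => hd; case: ifP => hdg.
- by rewrite !mulrA H1 H2 subrr.
- rewrite mulr0 subr0 mulrA H1.
  move/negbT: hdg => hdg.
  have [b hb] : exists b, dQ Q (d - g) (p b) < 0.
    case: (pselect (exists b, dQ Q (d - g) (p b) < 0)) => [//|hne].
    exfalso; move/negP: hdg; apply; apply/mem_set; apply: (Lam_cone hJ) => b.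
    by rewrite leNgt; apply/negP => hlt; apply: hne; exists b.
  have hW : Wf (eig Q eps lam p 0 (p b) / lam) (dQ Q d (p b)) (dQ Q g (p b)) = 0.
    rewrite (@eig_pb _ _ _ _ _ _ _ _ (hsmooth _ hJ)) mul0r /Wf; rewrite dQB subr_lt0 in hb.
    case: ifP => hm; rewrite poch0 //.
      by rewrite subr_gt0.
    rewrite oppr_gt0; apply: (lt_le_trans hb); by rewrite leNgt hm.
  by rewrite (bigD1 (p b)) //= hW !mul0r.

- exfalso; move/negbT: hd => /negP; apply; apply/mem_set.
  by have := Lam_add (set_mem hdg) hg; rewrite subrK.
- by rewrite !mulr0 subrr.
Qed.
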